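(* Let $\Bbbk=\mathbb{K}_0\subsetneq\mathbb{K}_1\subsetneq\cdots\subsetneq\mathbb{K}_m$ be a tower of fields with $[\mathbb{K}_j:\mathbb{K}_{j-1}]=2$ for $j=1,\dots,m$, and let $n\ge1$. There exists an algorithm for the inversion of a generic element of $M_n(\mathbb{K}_m)$ which costs $3(3^m-2^m)$ multiplications and $2^m$ inversions in $M_n(\Bbbk)$.
   Context: $M_n(\mathbb{L})$ denotes $n\times n$ matrices over $\mathbb{L}$. For each $j$, $\mathbb{K}_j=\mathbb{K}_{j-1}[\xi_j]$ where the minimal polynomial of $\xi_j$ over $\mathbb{K}_{j-1}$ is in normal form $x^2+\tau_j$ or $x^2+x+\tau_j$. ''Generic'' means for all elements outside a proper Zariski-closed subset of $M_n(\mathbb{K}_m)\cong\Bbbk^{2^m n^2}$. Additions and scalar multiplications are not counted. *)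

(* Defs.v *)
From HB Require Import structures.
From mathcomp Require Import all_boot all_order all_algebra all_field.
From mathcomp Require Import mpoly.
Set Implicit Arguments. Unset Strict Implicit. Unset Printing Implicit Defensive.
Import GRing.Theory.
Local Open Scope ring_scope.

(* Each instruction appends a new
   register:
   - ILin c0 cs : c0%:M + \sum_(c, j) c *: reg_j   (free: additions and
                  scalar multiplications by elements of k are not counted)
   - IMul i j   : reg_i *m reg_j                   (counted multiplication)
   - IInv i     : invmx reg_i, fails if reg_i is singular (counted inversion) *)
Inductive instr (k : Type) :=
  | ILin of k & seq (k * nat)
  | IMul of nat & nat
  | IInv of nat.

Section SLP.
Variables (k : fieldType) (n : nat).

Definition slp_step (regs : seq 'M[k]_n) (I : instr k) : option (seq 'M[k]_n) :=
  match I with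
  | ILin c0 cs => Some (rcons regs (c0%:M + \sum_(p <- cs) p.1 *: nth 0 regs p.2))
  | IMul i j => Some (rcons regs (nth 0 regs i *m nth 0 regs j))
  | IInv i => if nth 0 regs i \in unitmx then Some (rcons regs (invmx (nth 0 regs i)))
              else None
  end.

Definition slp_run (prog : seq (instr k)) (inputs : seq 'M[k]_n) : option (seq 'M[k]_n) :=
  foldl (fun o I => obind (fun regs => slp_step regs I) o) (Some inputs) prog.

Definition slp_eval (prog : seq (instr k)) (outs : seq nat) (inputs : seq 'M[k]_n)
  : option (seq 'M[k]_n) :=
  obind (fun regs => Some [seq nth 0 regs o | o <- outs]) (slp_run prog inputs).

Definition is_mul (I : instr k) : bool := if I is IMul _ _ then true else false.
Definition is_inv (I : instr k) : bool := if I is IInv _ then true else false.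
Definition n_mul (prog : seq (instr k)) : nat := count is_mul prog.
Definition n_inv (prog : seq (instr k)) : nat := count is_inv prog.
End SLP.

Section Coords.
Variables (k : fieldType) (L : fieldExtType k) (n d : nat).
Definition coord_mx (b : d.-tuple L) (A : 'M[L]_n) (i : 'I_d) : 'M[k]_n :=
  \matrix_(r, c) coord b i (A r c).
Definition coord_pt (b : d.-tuple L) (A : 'M[L]_n) : 'I_(d * (n * n)) -> k :=
  fun j => mxvec (\matrix_(i < d) mxvec (coord_mx b A i)) 0 j.
End Coords.

(* Main.v *)
Require Import Defs.
From HB Require Import structures.
From mathcomp Require Import all_boot all_order all_algebra all_field.
From mathcomp Require Import mpoly.
From mathcomp Require Import ring zify.
From Stdlib Require Import Lia.
Import GRing.Theory.
Local Open Scope ring_scope.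

Section Slp.
Variables (k : fieldType) (n : nat).
Local Notation M := 'M[k]_n.
Lemma foldl_none (p : seq (instr k)) :
  foldl (fun o I => obind (fun regs : seq M => slp_step regs I) o) None p = None.
Proof. by elim: p. Qed.

Lemma slp_run_cons I p (regs : seq M) :
  slp_run (I :: p) regs =
  if slp_step regs I is Some r then slp_run p r else None.
Proof. by rewrite /slp_run /=; case: (slp_step regs I) => //=; rewrite foldl_none. Qed.

Lemma slp_run_cat p1 p2 (regs : seq M) :
  slp_run (p1 ++ p2) regs = obind (slp_run p2) (slp_run p1 regs).
Proof.
elim: p1 regs => [|I p IH] regs //=.
rewrite !slp_run_cons; case: (slp_step regs I) => //.
Qed.

Lemma slp_step_ext {regs regs' : seq M} {I} :
  slp_step regs I = Some regs' -> regs' = rcons regs (last 0 regs').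
Proof.
case: I => [c cs|i j|i] /=; [by move=> [<-]; rewrite last_rcons..|].
by case: ifP => // _ [<-]; rewrite last_rcons.
Qed.

Lemma slp_run_ext p (regs regs' : seq M) :
  slp_run p regs = Some regs' -> exists e, regs' = regs ++ e /\ size e = size p.
Proof.
elim: p regs => [|I p IH] regs /=.
  by rewrite /slp_run /= => -[<-]; exists [::]; rewrite cats0.
rewrite slp_run_cons; case E: (slp_step regs I) => [r|] // /IH [e [-> He]].
rewrite (slp_step_ext E); exists (last 0 r :: e).
by rewrite cat_rcons /= He.
Qed.

End Slp.
Arguments slp_run_ext {k n p regs regs'}.

Section Rep.
Variables (k : fieldType) (L : fieldExtType k) (n : nat).
Local Notation M := 'M[k]_n.

Record blk := Blk { bprog : seq (instr k); bout : seq nat }.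
Definition code := nat -> blk.
Definition bind (c : code) (f : seq nat -> code) : code := fun r =>
  let b := c r in let b2 := f (bout b) (r + size (bprog b))%N in
  Blk (bprog b ++ bprog b2) (bout b2).
Definition ret (o : seq nat) : code := fun _ => Blk [::] o.
Definition runc (c : code) (regs : seq M) := slp_run (bprog (c (size regs))) regs.
Definition outc (c : code) (regs : seq M) := bout (c (size regs)).

Lemma runc_bind c f regs regs1 : runc c regs = Some regs1 ->
  runc (bind c f) regs = runc (f (outc c regs)) regs1 /\
  outc (bind c f) regs = outc (f (outc c regs)) regs1.
Proof.
rewrite /runc /outc /bind /= slp_run_cat => H; rewrite H /=.
have [e [-> He]] := slp_run_ext H.
by rewrite size_cat He.
Qed.

Lemma runc_bind_None c f regs : runc c regs = None -> runc (bind c f) regs = None.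
Proof. by rewrite /runc /bind /= slp_run_cat => ->. Qed.

Lemma runc_ret o regs : runc (ret o) regs = Some regs /\ outc (ret o) regs = o.
Proof. by []. Qed.

Definition vals (regs : seq M) (x : seq nat) := [seq nth 0 regs i | i <- x].
Definition valid (regs : seq M) (x : seq nat) := all (fun i => i < size regs)%N x.
Definition pt regs x V := valid regs x /\ vals regs x = V.
Definition ext (regs regs' : seq M) := exists e, regs' = regs ++ e.

Lemma ext_refl regs : ext regs regs. Proof. by exists [::]; rewrite cats0. Qed.
Lemma ext_trans r1 r2 r3 : ext r1 r2 -> ext r2 r3 -> ext r1 r3.
Proof. by move=> [e1 ->] [e2 ->]; exists (e1 ++ e2); rewrite catA. Qed.

Lemma pt_ext regs regs' x V : ext regs regs' -> pt regs x V -> pt regs' x V.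
Proof.
move=> [e ->] [Hv <-]; split.
  by apply/allP => i /(allP Hv) Hi; rewrite size_cat ltn_addr.
by apply/eq_in_map => i /(allP Hv) Hi; rewrite nth_cat Hi.
Qed.

Lemma runc_ext c regs regs' : runc c regs = Some regs' -> ext regs regs'.
Proof. by move/slp_run_ext => [e [-> _]]; exists e. Qed.

Lemma pt_cat regs x y V W : pt regs x V -> pt regs y W -> pt regs (x ++ y) (V ++ W).
Proof.
by move=> [H1 <-] [H2 <-]; split; [rewrite /valid all_cat; apply/andP|rewrite /vals map_cat].
Qed.

Lemma pt_take regs x V h : pt regs x V -> pt regs (take h x) (take h V).
Proof.
move=> [H1 <-]; split; last by rewrite /vals map_take.
by apply/allP => i /mem_take /(allP H1).
Qed.

Lemma pt_drop regs x V h : pt regs x V -> pt regs (drop h x) (drop h V).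
Proof.
move=> [H1 <-]; split; last by rewrite /vals map_drop.
by apply/allP => i /mem_drop /(allP H1).
Qed.

Lemma pt_size regs x V : pt regs x V -> size V = size x.
Proof. by move=> [_ <-]; rewrite size_map. Qed.

Definition rep (F : seq L) (V : seq M) : 'M[L]_n :=
  \sum_(i < size F) F`_i *: map_mx (in_alg L) V`_i.

Lemma repE F V r c : rep F V r c = \sum_(i < size F) (V`_i r c) *: F`_i.
Proof.
rewrite /rep summxE; apply: eq_bigr => i _.
by rewrite !mxE mulr_algr.
Qed.

Lemma rep_inj F V W : free F -> size V = size F -> size W = size F ->
  rep F V = rep F W -> V = W.
Proof.
move=> Ff SV SW Hr; apply: (@eq_from_nth _ 0); first by rewrite SV SW.
move=> i; rewrite SV => Hi; apply/matrixP => r c.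
move/matrixP: Hr => /(_ r c); rewrite !repE => /eqP; rewrite -subr_eq0.
rewrite -sumrB => /eqP H0.
have /(@freeP _ _ _ (in_tuple F)) := Ff => /(_ (fun j => V`_j r c - W`_j r c)).
move=> /(_ _ (Ordinal Hi)) /= => H; apply/eqP; rewrite -subr_eq0; apply/eqP; apply: H.
by apply: etrans H0; apply: eq_bigr => j _; rewrite scalerBl.
Qed.

Definition linval (regs : seq M) (cs : seq (k * nat)) : M :=
  \sum_(p <- cs) p.1 *: nth 0 regs p.2.

Lemma linval_rcons regs v cs : all (fun p => p.2 < size regs)%N cs ->
  linval (rcons regs v) cs = linval regs cs.
Proof.
move=> H; rewrite /linval !big_seq; apply: eq_bigr => p /(allP H) Hp.
by rewrite nth_rcons Hp.
Qed.

Lemma run_lins css regs :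
  (forall cs, cs \in css -> all (fun p => p.2 < size regs)%N cs) ->
  slp_run [seq ILin 0 cs | cs <- css] regs =
    Some (regs ++ [seq linval regs cs | cs <- css]).
Proof.
elim: css regs => [|cs css IH] regs H /=; first by rewrite cats0.
have Hcs := H cs (mem_head _ _).
rewrite slp_run_cons /= IH; last first.
  move=> cs' Hcs'; apply/allP => p /(allP (H cs' _)) Hp.
  by rewrite size_rcons ltnS ltnW // Hp // inE Hcs' orbT.
rewrite cat_rcons; congr (Some (regs ++ _ :: _)).
  by rewrite (_ : 0%:M = 0) ?add0r // -scalemx1 scale0r.
apply/eq_in_map => cs' Hcs'; apply: linval_rcons.
by apply: H; rewrite inE Hcs' orbT.
Qed.

Definition term := (L * (seq L * seq nat))%type.

Fixpoint lincs (T : seq L) (l : 'I_(size T)) (ts : seq term) : seq (k * nat) :=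
  if ts is t :: ts' then
    [seq (coord (in_tuple T) l (t.1 * t.2.1`_i), nth 0%N t.2.2 i) | i <- iota 0 (size t.2.1)]
      ++ lincs T l ts'
  else [::].

Definition lin (T : seq L) (ts : seq term) : code := fun r =>
  Blk [seq ILin 0 (lincs T l ts) | l <- enum 'I_(size T)] (iota r (size T)).

Lemma linval_lincs regs T l ts r c :
  (linval regs (lincs T l ts)) r c = \sum_(t <- ts) \sum_(i < size t.2.1)
     coord (in_tuple T) l (t.1 * t.2.1`_i) * (nth 0 regs (nth 0%N t.2.2 i)) r c.
Proof.
elim: ts => [|t ts IH]; first by rewrite /linval !big_nil mxE.
rewrite big_cons /= -IH /linval big_cat mxE; congr (_ + _).
rewrite big_map summxE.
have -> : iota 0 (size t.2.1) = index_iota 0 (size t.2.1) by rewrite /index_iota subn0.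
rewrite big_mkord.
by apply: eq_bigr => i _; rewrite mxE.
Qed.

Lemma lincs_valid regs T l ts :
  (forall t, t \in ts -> size t.2.1 = size t.2.2 /\ valid regs t.2.2) ->
  all (fun p => p.2 < size regs)%N (lincs T l ts).
Proof.
elim: ts => [|t ts IH] H //=.
rewrite all_cat; apply/andP; split; last first.
  by apply: IH => t' Ht'; apply: H; rewrite inE Ht' orbT.
have [Hs Hv] := H t (mem_head _ _).
apply/allP => p /mapP [i]; rewrite mem_iota add0n => Hi -> /=.
by apply: (allP Hv); apply: mem_nth; rewrite -Hs.
Qed.

Lemma lin_ok T ts regs :
  (forall t, t \in ts -> [/\ size t.2.1 = size t.2.2, valid regs t.2.2 &
      forall i, (i < size t.2.1)%N -> t.1 * t.2.1`_i \in <<T>>%VS]) ->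
  exists regs' W, [/\ runc (lin T ts) regs = Some regs', ext regs regs',
    pt regs' (outc (lin T ts) regs) W, size W = size T &
    rep T W = \sum_(t <- ts) t.1 *: rep t.2.1 (vals regs t.2.2)].
Proof.
move=> H.
set W := [seq linval regs (lincs T l ts) | l <- enum 'I_(size T)].
have Hrun : runc (lin T ts) regs = Some (regs ++ W).
  rewrite /runc /lin /= (_ : [seq ILin 0 (lincs T l ts) | l <- enum 'I_(size T)] = [seq ILin 0 cs | cs <- [seq lincs T l ts | l <- enum 'I_(size T)]]); last by elim: (enum _) => //= ? ? ->.
  rewrite run_lins; first by congr (Some (_ ++ _)); rewrite /W; elim: (enum _) => //= ? ? ->.
  move=> cs /mapP [l _ ->]; apply: lincs_valid => t Ht.
  by have [? ? _] := H t Ht.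
have SW : size W = size T by rewrite size_map size_enum_ord.
exists (regs ++ W), W; split => //.
- by exists W.
- split.
    by rewrite /valid /outc /lin /=; apply/allP => i; rewrite mem_iota size_cat SW => /andP[]...
  rewrite /vals /outc /lin /=; apply: (@eq_from_nth _ 0).
    by rewrite size_map size_iota SW.
  move=> i; rewrite size_map size_iota => Hi.
  by rewrite (nth_map 0%N) ?size_iota // nth_iota // nth_cat ltnNge leq_addr /= addKn.
apply/matrixP => r c; rewrite repE.
transitivity (\sum_(t <- ts) \sum_(i < size t.2.1)
   (nth 0 regs (nth 0%N t.2.2 i) r c) *: (t.1 * t.2.1`_i)).
  under eq_bigr => l _ do
    rewrite (nth_map l) ?size_enum_ord // nth_ord_enum linval_lincs scaler_suml.
  rewrite exchange_big /=; apply: eq_big_seq => t Ht.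
  under eq_bigr => l _ do rewrite scaler_suml.
  rewrite exchange_big; apply: eq_bigr => i _.
  have [_ _ Hm] := H t Ht.
  rewrite [X in _ = _ *: X](coord_span (X := in_tuple T) (Hm i (ltn_ord i))).
  by rewrite scaler_sumr; apply: eq_bigr => l _; rewrite scalerA mulrC.
rewrite summxE; apply: eq_big_seq => t Ht; rewrite mxE repE mulr_sumr.
have [Hs _ _] := H t Ht.
apply: eq_bigr => i _; rewrite (nth_map 0%N); last by rewrite -Hs.
by rewrite scalerAr.
Qed.

Definition okc (c : code) (regs : seq M) (Q : seq M -> seq nat -> Prop) :=
  exists regs', [/\ runc c regs = Some regs', ext regs regs' & Q regs' (outc c regs)].
Definition okp (c : code) (regs : seq M) (Q : seq M -> seq nat -> Prop) :=
  forall regs', runc c regs = Some regs' -> Q regs' (outc c regs).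

Lemma okc_bind c f regs Q1 Q : okc c regs Q1 ->
  (forall regs1 o, ext regs regs1 -> Q1 regs1 o -> okc (f o) regs1 Q) ->
  okc (bind c f) regs Q.
Proof.
move=> [regs1 [R1 E1 H1]] H.
have [regs2 [R2 E2 H2]] := H _ _ E1 H1.
have [Er Eo] := runc_bind c f regs _ R1.
by exists regs2; rewrite Er Eo; split => //; apply: ext_trans E2.
Qed.

Lemma okp_bind c f regs Q1 Q : okp c regs Q1 ->
  (forall regs1 o, ext regs regs1 -> Q1 regs1 o -> okp (f o) regs1 Q) ->
  okp (bind c f) regs Q.
Proof.
move=> H1 H regs'.
case R1: (runc c regs) => [regs1|]; last by rewrite runc_bind_None.
have [-> ->] := runc_bind c f regs _ R1.
by apply: H; [apply: runc_ext R1|apply: H1].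
Qed.

Lemma okc_okp c regs Q : okc c regs Q -> okp c regs Q.
Proof. by move=> [regs1 [R1 _ H1]] regs'; rewrite R1 => -[<-]. Qed.

Lemma okc_ret o regs (Q : seq M -> seq nat -> Prop) : Q regs o -> okc (ret o) regs Q.
Proof. by move=> H; exists regs; split => //; apply: ext_refl. Qed.

Lemma okp_ret o regs (Q : seq M -> seq nat -> Prop) : Q regs o -> okp (ret o) regs Q.
Proof. by move=> H; apply: okc_okp; apply: okc_ret. Qed.

Lemma okc_weaken c regs (Q Q' : seq M -> seq nat -> Prop) :
  okc c regs Q -> (forall r o, Q r o -> Q' r o) -> okc c regs Q'.
Proof. by move=> [r [R E H]] HQ; exists r; split => //; apply: HQ. Qed.

End Rep.
Arguments Blk {k}. Arguments bind {k}. Arguments ret {k}. Arguments runc {k n}.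
Arguments outc {k n}. Arguments lin {k L}. Arguments rep {k L n}. Arguments pt {k n}.
Arguments ext {k n}. Arguments vals {k n}. Arguments valid {k n}.
Arguments lin_ok {k L n}. Arguments runc_bind {k n}. Arguments runc_bind_None {k n}.
Arguments runc_ret {k n}. Arguments ext_refl {k n}. Arguments ext_trans {k n}.
Arguments pt_ext {k n}. Arguments runc_ext {k n}. Arguments pt_cat {k n}.
Arguments pt_take {k n}. Arguments pt_drop {k n}. Arguments pt_size {k n}.
Arguments repE {k L n}. Arguments rep_inj {k L n}.
Arguments okc {k n}. Arguments okp {k n}. Arguments okc_bind {k n c f regs Q1 Q}. Arguments okp_bind {k n c f regs Q1 Q}.
Arguments okc_okp {k n c regs Q}. Arguments okc_ret {k n}. Arguments okp_ret {k n}. Arguments okc_weaken {k n c regs Q Q'}.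
Arguments bprog {k}. Arguments bout {k}.

Section Poly.
Variables (k : fieldType) (n : nat).
Local Notation M := 'M[k]_n.
Variable N : nat.
Local Notation P := {mpoly k[N]}.

Definition regsv (v : 'I_N -> k) (D : P) (Ns : seq 'M[P]_n) : seq M :=
  [seq (D.@[v])^-1 *: map_mx (meval v) X | X <- Ns].

Lemma nth_regsv v D Ns i :
  nth 0 (regsv v D Ns) i = (D.@[v])^-1 *: map_mx (meval v) (nth 0 Ns i).
Proof.
case: (ltnP i (size Ns)) => Hi; first by rewrite (nth_map 0).
by rewrite !nth_default ?size_map // map_mx0 scaler0.
Qed.


Lemma regsv_rcons v D Ns X :
  regsv v D (rcons Ns X) = rcons (regsv v D Ns) ((D.@[v])^-1 *: map_mx (meval v) X).
Proof. by rewrite /regsv map_rcons. Qed.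

Lemma regsv_scale v D (c : P) Ns : c.@[v] != 0 ->
  regsv v (D * c) [seq c *: X | X <- Ns] = regsv v D Ns.
Proof.
move=> cv; rewrite /regsv -map_comp; apply: eq_map => X /=.
by rewrite map_mxZ scalerA rmorphM invfM -mulrA mulVf // mulr1.
Qed.

Lemma step_poly (I : instr k) (D : P) Ns : exists D1 Ns1, forall v,
  ((D1.@[v] != 0) = (D.@[v] != 0) && (slp_step (regsv v D Ns) I != None)) /\
  (D1.@[v] != 0 -> slp_step (regsv v D Ns) I = Some (regsv v D1 Ns1)).
Proof.
case: I => [c0 cs|i j|i].
- exists D, (rcons Ns ((c0%:MP * D)%:M + \sum_(p <- cs) p.1%:MP *: nth 0 Ns p.2)).
  move=> v; split; first by rewrite /= andbT.
  move=> Dv /=; rewrite regsv_rcons; congr (Some (rcons _ _)).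
  rewrite map_mxD map_scalar_mx rmorphM /= mevalC scalerDr scale_scalar_mx.
  rewrite mulrCA mulVf // mulr1 map_mx_sum scaler_sumr; congr (_ + _).
  apply: eq_bigr => p _; rewrite nth_regsv map_mxZ /= (mevalC v p.1).
  by rewrite !scalerA mulrC.
- exists (D * D), (rcons [seq D *: X | X <- Ns] (nth 0 Ns i *m nth 0 Ns j)).
  move=> v; split.
    by rewrite /= andbT rmorphM mulf_eq0 orbb.
  rewrite rmorphM mulf_eq0 orbb => Dv /=.
  rewrite regsv_rcons regsv_scale // !nth_regsv.
  congr (Some (rcons _ _)).
  by rewrite map_mxM -scalemxAl -scalemxAr scalerA rmorphM invfM.
- set Ni := nth 0 Ns i.
  exists (D * \det Ni), (rcons [seq \det Ni *: X | X <- Ns] ((D * D) *: \adj Ni)).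
  move=> v.
  have Hu : D.@[v] != 0 -> ((nth 0 (regsv v D Ns) i \in unitmx) = ((\det Ni).@[v] != 0)).
    move=> Dv; rewrite nth_regsv -/Ni unitmxE detZ unitrM unitrX ?unitfE ?invr_eq0 //.
    by rewrite det_map_mx.
  case: (boolP (D.@[v] != 0)) => Dv /=; last first.
    by move/negPn: Dv => /eqP Dv; rewrite mevalM Dv mul0r eqxx.
  rewrite Hu // mevalM mulf_eq0 negb_or Dv /=.
  split; first by case: ((\det Ni).@[v] != 0).
  move=> dv; rewrite dv regsv_rcons regsv_scale //.
  congr (Some (rcons _ _)).
  rewrite nth_regsv -/Ni invmxZ; last by rewrite -nth_regsv Hu.
  have Hd : \det (map_mx (meval v) Ni) = (\det Ni).@[v] by rewrite det_map_mx.
  have Hun : map_mx (meval v) Ni \in unitmx by rewrite unitmxE Hd unitfE.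
  rewrite invrK /invmx Hun Hd map_mxZ map_mx_adj.
  rewrite !scalerA mevalM invfM; congr (_ *: _).
  by field; rewrite dv Dv.
Qed.

Lemma run_poly p (D : P) Ns : exists D', forall v,
  (D'.@[v] != 0) = (D.@[v] != 0) && (slp_run p (regsv v D Ns) != None).
Proof.
elim: p D Ns => [|I p IH] D Ns.
  by exists D => v; rewrite /slp_run /= andbT.
have [D1 [Ns1 H1]] := step_poly I D Ns.
have [D' H'] := IH D1 Ns1.
exists D' => v; rewrite H' slp_run_cons.
have [E1 E2] := H1 v.
case: (boolP (D1.@[v] != 0)) => D1v.
  by rewrite (E2 D1v); move: E1; rewrite D1v; case: (D.@[v] != 0).
move: E1; rewrite (negPf D1v) /=.
case: (D.@[v] != 0) => //=.
by case: (slp_step _ I).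
Qed.

End Poly.

Section Algo.
Variables (k : fieldType) (L : fieldExtType k) (n : nat).
Variables (xi al be : nat -> L).
Local Notation M := 'M[k]_n.
Local Notation code := (code k).
Local Notation lin := (@lin k L).
Local Notation rep := (@rep k L n).

Fixpoint E (j : nat) : seq L :=
  if j is j'.+1 then E j' ++ [seq e * xi j'.+1 | e <- E j'] else [:: 1].

Lemma size_E j : size (E j) = (2 ^ j)%N.
Proof. by elim: j => //= j IH; rewrite size_cat size_map IH expnS mul2n addnn. Qed.

Fixpoint mulJ (j : nat) (x y : seq nat) : code :=
  match j with
  | 0 => fun r => Blk [:: IMul k (nth 0%N x 0) (nth 0%N y 0)] [:: r]
  | j'.+1 =>
    let h := (2 ^ j')%N in let F := E j' in
    let x0 := take h x in let x1 := drop h x in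
    let y0 := take h y in let y1 := drop h y in
    bind (mulJ j' x0 y0) (fun m0 =>
    bind (mulJ j' x1 y1) (fun m1 =>
    bind (lin F [:: (1, (F, x0)); (1, (F, x1))]) (fun ps =>
    bind (lin F [:: (1, (F, y0)); (1, (F, y1))]) (fun qs =>
    bind (mulJ j' ps qs) (fun m2 =>
    bind (lin F [:: (1, (F, m0)); (al j, (F, m1))]) (fun r0 =>
    bind (lin F [:: (1, (F, m2)); (-1, (F, m0)); (be j - 1, (F, m1))]) (fun r1 =>
    ret (r0 ++ r1))))))))
  end.

Fixpoint invJ (j : nat) (x : seq nat) : code :=
  match j with
  | 0 => fun r => Blk [:: IInv k (nth 0%N x 0)] [:: r]
  | j'.+1 =>
    let h := (2 ^ j')%N in let F := E j' in
    let x0 := take h x in let x1 := drop h x in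
    bind (lin F [:: (1, (F, x0)); (be j, (F, x1))]) (fun a0 =>
    bind (invJ j' a0) (fun bi =>
    bind (mulJ j' x1 bi) (fun xx =>
    bind (mulJ j' xx x1) (fun yy =>
    bind (lin F [:: (1, (F, x0)); (- al j, (F, yy))]) (fun s =>
    bind (invJ j' s) (fun si =>
    bind (mulJ j' si xx) (fun z =>
    bind (lin F [:: (-1, (F, z))]) (fun nz =>
    ret (si ++ nz)))))))))
  end.


Lemma count_lin (p : pred (instr k)) T ts r :
  ~~ p (ILin 0 [::]) -> (forall c0 cs, p (ILin c0 cs) = p (ILin c0 [::])) ->
  count p (bprog (lin T ts r)) = 0%N.
Proof.
move=> H0 H; rewrite /lin /= count_map.
by elim: (enum _) => //= l s ->; rewrite /= H (negPf H0).
Qed.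

Lemma nmul_bind (c : code) (f : seq nat -> code) r : n_mul (bprog (bind c f r)) =
  (n_mul (bprog (c r)) + n_mul (bprog (f (bout (c r)) (r + size (bprog (c r)))%N)))%N.
Proof. by rewrite /n_mul /bind /= count_cat. Qed.
Lemma ninv_bind (c : code) (f : seq nat -> code) r : n_inv (bprog (bind c f r)) =
  (n_inv (bprog (c r)) + n_inv (bprog (f (bout (c r)) (r + size (bprog (c r)))%N)))%N.
Proof. by rewrite /n_inv /bind /= count_cat. Qed.
Lemma nmul_lin T ts r : n_mul (bprog (lin T ts r)) = 0%N.
Proof. by apply: count_lin. Qed.
Lemma ninv_lin T ts r : n_inv (bprog (lin T ts r)) = 0%N.
Proof. by apply: count_lin. Qed.

Lemma mulJ_count j x y r :
  n_mul (bprog (mulJ j x y r)) = (3 ^ j)%N /\ n_inv (bprog (mulJ j x y r)) = 0%N.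
Proof.
elim: j x y r => [|j IH] x y r; first by [].
rewrite [mulJ _ _ _]/=.
rewrite !nmul_bind !ninv_bind !nmul_lin !ninv_lin.
rewrite !(IH _ _ _).1 !(IH _ _ _).2 /=.
by rewrite expnS; split => //; lia.
Qed.


Lemma invJ_count j x r :
  n_mul (bprog (invJ j x r)) = (3 * (3 ^ j - 2 ^ j))%N /\
  n_inv (bprog (invJ j x r)) = (2 ^ j)%N.
Proof.
elim: j x r => [|j IH] x r; first by [].
rewrite [invJ _ _]/=.
rewrite !nmul_bind !ninv_bind !nmul_lin !ninv_lin.
rewrite !(IH _ _).1 !(IH _ _).2 !(mulJ_count _ _ _ _).1 !(mulJ_count _ _ _ _).2 /=.
have : (2 ^ j <= 3 ^ j)%N by elim: (j) => // i IHi; rewrite !expnS; lia.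
rewrite !expnS; split; lia.
Qed.


Variable m : nat.
Variable K : nat -> {subfield L}.
Hypothesis HspanE : forall j, (j <= m)%N -> <<E j>>%VS = K j.
Hypothesis HfreeE : forall j, (j <= m)%N -> free (E j).
Hypothesis Hal : forall j, (j < m)%N -> al j.+1 \in K j.
Hypothesis Hbe : forall j, (j < m)%N -> be j.+1 \in K j.
Hypothesis Hxi : forall j, (j < m)%N -> xi j.+1 ^+ 2 = al j.+1 + be j.+1 * xi j.+1.

Lemma memE j c i : (j <= m)%N -> c \in K j -> c * (E j)`_i \in <<E j>>%VS.
Proof.
move=> Hj Hc; case: (ltnP i (size (E j))) => Hi; last by rewrite nth_default // mulr0 mem0v.
rewrite HspanE //; apply: memvM => //.
by rewrite -HspanE //; apply: memv_span; apply: mem_nth.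
Qed.

Definition isv j (regs : seq M) (o : seq nat) (A : 'M[L]_n) :=
  exists W, [/\ pt regs o W, size W = (2 ^ j)%N & rep (E j) W = A].

Lemma isv_ext j regs regs' o A : ext regs regs' -> isv j regs o A -> isv j regs' o A.
Proof. by move=> He [W [P S R]]; exists W; split => //; apply: pt_ext P. Qed.

Lemma rep_split j V :
  rep (E j.+1) V = rep (E j) (take (2 ^ j) V) + xi j.+1 *: rep (E j) (drop (2 ^ j) V).
Proof.
rewrite /rep /= size_cat size_map big_split_ord /=; congr (_ + _).
  apply: eq_bigr => i _; rewrite nth_cat /= ltn_ord nth_take //.
  by rewrite -size_E.
rewrite scaler_sumr; apply: eq_bigr => i _.
rewrite nth_cat /= ltnNge leq_addr /= addKn (nth_map 0) // nth_drop -(size_E j).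
by rewrite scalerA mulrC.
Qed.

Lemma isv_split j regs x A : isv j.+1 regs x A ->
  exists A0 A1, [/\ isv j regs (take (2 ^ j) x) A0, isv j regs (drop (2 ^ j) x) A1
                  & A = A0 + xi j.+1 *: A1].
Proof.
move=> [W [P S R]].
exists (rep (E j) (take (2 ^ j) W)), (rep (E j) (drop (2 ^ j) W)); split.
- exists (take (2 ^ j) W); split => //; first exact: pt_take.
  by rewrite size_take S expnS ltn_Pmull // expn_gt0.
- exists (drop (2 ^ j) W); split => //; first exact: pt_drop.
  by rewrite size_drop S expnS mul2n -addnn addnK.
- by rewrite -R rep_split.
Qed.

Lemma isv_cat j regs o0 o1 A0 A1 : isv j regs o0 A0 -> isv j regs o1 A1 ->
  isv j.+1 regs (o0 ++ o1) (A0 + xi j.+1 *: A1).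
Proof.
move=> [W0 [P0 S0 R0]] [W1 [P1 S1 R1]].
exists (W0 ++ W1); split; first exact: pt_cat.
  by rewrite size_cat S0 S1 expnS mul2n addnn.
by rewrite rep_split -S0 take_size_cat // drop_size_cat // R0 R1.
Qed.

Lemma linE_ok j ts regs : (j <= m)%N ->
  (forall t, t \in ts -> [/\ t.2.1 = E j, t.1 \in K j & exists2 V, pt regs t.2.2 V & size V = (2 ^ j)%N]) ->
  okc (lin (E j) ts) regs (fun regs' o =>
     isv j regs' o (\sum_(t <- ts) t.1 *: rep (E j) (vals regs t.2.2))).
Proof.
move=> Hj H.
have Hts : forall t, t \in ts -> [/\ size t.2.1 = size t.2.2, valid regs t.2.2 &
      forall i, (i < size t.2.1)%N -> t.1 * t.2.1`_i \in <<E j>>%VS].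
  move=> t Ht; have [-> Hc [V PV SV]] := H t Ht; split.
  - by rewrite size_E -SV (pt_size _ _ _ PV).
  - by case: PV.
  - by move=> i _; apply: memE.
have [regs' [W [R Ex P HS Rp]]] := lin_ok (E j) ts regs Hts.
exists regs'; split => //; exists W; split; [by []|by rewrite HS size_E|].
by rewrite Rp; apply: eq_big_seq => t Ht; have [-> _ _] := H t Ht.
Qed.

Lemma lin1E j c x A regs : (j <= m)%N -> c \in K j -> isv j regs x A ->
  okc (lin (E j) [:: (c, (E j, x))]) regs (fun r o => isv j r o (c *: A)).
Proof.
move=> Hj Hc [W [P HS R]]; apply: okc_weaken.
  apply: (linE_ok j _ regs Hj) => t; rewrite inE => /eqP -> /=; split => //.
  by exists W.
by move=> r o; rewrite big_cons big_nil addr0 /=; case: P => _ ->; rewrite R.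
Qed.

Lemma lin2E j c1 c2 x1 x2 A1 A2 regs : (j <= m)%N -> c1 \in K j -> c2 \in K j ->
  isv j regs x1 A1 -> isv j regs x2 A2 ->
  okc (lin (E j) [:: (c1, (E j, x1)); (c2, (E j, x2))]) regs
    (fun r o => isv j r o (c1 *: A1 + c2 *: A2)).
Proof.
move=> Hj Hc1 Hc2 [W1 [P1 S1 R1]] [W2 [P2 S2 R2]]; apply: okc_weaken.
  apply: (linE_ok j _ regs Hj) => t.
  rewrite !inE => /orP [/eqP -> | /eqP ->] /=; split => //.
    by exists W1.
  by exists W2.
move=> r o; rewrite !big_cons big_nil addr0 /=.
by case: P1 => _ ->; case: P2 => _ ->; rewrite R1 R2.
Qed.

Lemma lin3E j c1 c2 c3 x1 x2 x3 A1 A2 A3 regs : (j <= m)%N ->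
  c1 \in K j -> c2 \in K j -> c3 \in K j ->
  isv j regs x1 A1 -> isv j regs x2 A2 -> isv j regs x3 A3 ->
  okc (lin (E j) [:: (c1, (E j, x1)); (c2, (E j, x2)); (c3, (E j, x3))]) regs
    (fun r o => isv j r o (c1 *: A1 + (c2 *: A2 + c3 *: A3))).
Proof.
move=> Hj Hc1 Hc2 Hc3 [W1 [P1 S1 R1]] [W2 [P2 S2 R2]] [W3 [P3 S3 R3]].
apply: okc_weaken.
  apply: (linE_ok j _ regs Hj) => t.
  rewrite !inE => /orP [/eqP -> | /orP [/eqP -> | /eqP ->]] /=; split => //.
  - by exists W1.
  - by exists W2.
  - by exists W3.
move=> r o; rewrite !big_cons big_nil addr0 /=.
by case: P1 => _ ->; case: P2 => _ ->; case: P3 => _ ->; rewrite R1 R2 R3.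
Qed.


Lemma rep0 W : rep (E 0) W = map_mx (in_alg L) W`_0.
Proof. by rewrite /rep /= big_ord1 scale1r. Qed.

Lemma isv0 regs x A : isv 0 regs x A ->
  (nth 0%N x 0 < size regs)%N /\ A = map_mx (in_alg L) (nth 0 regs (nth 0%N x 0)).
Proof.
move=> [W [[Hv Hvals] HS <-]]; rewrite rep0.
have Sx : size x = 1%N by move: HS; rewrite -Hvals size_map.
have Hx : nth 0%N x 0 \in x by rewrite mem_nth // Sx.
split; first exact: (allP Hv).
by rewrite -Hvals (nth_map 0%N) // Sx.
Qed.

Lemma isv0_mk regs v : isv 0 (rcons regs v) [:: size regs] (map_mx (in_alg L) v).
Proof.
exists [:: v]; split => //; last by rewrite rep0.
split; first by rewrite /valid /= size_rcons ltnSn.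
by rewrite /vals /= nth_rcons ltnn eqxx.
Qed.

Lemma kara_id2 (P0 P1 Q0 Q1 : 'M[L]_n) (x a b : L) : x ^+ 2 = a + b * x ->
  (1 *: (P0 *m Q0) + a *: (P1 *m Q1)) +
  x *: (1 *: ((1 *: P0 + 1 *: P1) *m (1 *: Q0 + 1 *: Q1)) +
        ((-1) *: (P0 *m Q0) + (b - 1) *: (P1 *m Q1)))
  = (P0 + x *: P1) *m (Q0 + x *: Q1).
Proof.
move=> Hx.
rewrite !scale1r !mulmxDl !mulmxDr -!scalemxAl -!scalemxAr scalerA -expr2 Hx.
move: (P0 *m Q0) (P0 *m Q1) (P1 *m Q0) (P1 *m Q1) => u v w z.
apply/matrixP => r c; rewrite !mxE; ring.
Qed.

Ltac push E := match type of E with @ext _ _ ?r ?r' =>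
  repeat match goal with H : isv _ r _ _ |- _ => move/(isv_ext _ _ _ _ _ E): H => H end end.

Lemma mem1K j : (1 : L) \in K j. Proof. exact: mem1v. Qed.
Lemma memN1K j : (-1 : L) \in K j. Proof. by rewrite memvN mem1v. Qed.

Lemma mulJ_ok j x y A B regs : (j <= m)%N -> isv j regs x A -> isv j regs y B ->
  okc (mulJ j x y) regs (fun r o => isv j r o (A *m B)).
Proof.
elim: j x y A B regs => [|j IH] x y A B regs Hj HA HB.
  have [Hx ->] := isv0 _ _ _ HA; have [Hy ->] := isv0 _ _ _ HB.
  exists (rcons regs (nth 0 regs (nth 0%N x 0) *m nth 0 regs (nth 0%N y 0))); split.
  - by rewrite /runc /slp_run /=.
  - by exists [:: nth 0 regs (nth 0%N x 0) *m nth 0 regs (nth 0%N y 0)]; rewrite cats1.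
  - by rewrite -map_mxM; apply: isv0_mk.
have Hj' : (j <= m)%N := ltnW Hj.
have [A0 [A1 [HA0 HA1 ->]]] := isv_split _ _ _ _ HA.
have [B0 [B1 [HB0 HB1 ->]]] := isv_split _ _ _ _ HB.
clear HA HB.
rewrite [mulJ _ _ _]/=.
apply: (okc_bind (IH _ _ _ _ _ Hj' HA0 HB0)) => r1 o1 E1 H1; push E1.
apply: (okc_bind (IH _ _ _ _ _ Hj' HA1 HB1)) => r2 o2 E2 H2; push E2.
apply: (okc_bind (lin2E _ _ _ _ _ _ _ _ Hj' (mem1K j) (mem1K j) HA0 HA1)) => r3 o3 E3 H3; push E3.
apply: (okc_bind (lin2E _ _ _ _ _ _ _ _ Hj' (mem1K j) (mem1K j) HB0 HB1)) => r4 o4 E4 H4; push E4.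
apply: (okc_bind (IH _ _ _ _ _ Hj' H3 H4)) => r5 o5 E5 H5; push E5.
apply: (okc_bind (lin2E _ _ _ _ _ _ _ _ Hj' (mem1K j) (Hal _ Hj) H1 H2)) => r6 o6 E6 H6; push E6.
apply: (okc_bind (lin3E _ _ _ _ _ _ _ _ _ _ _ Hj' (mem1K j) (memN1K j) (memvB (Hbe _ Hj) (mem1K j)) H5 H1 H2)) => r7 o7 E7 H7; push E7.
apply: okc_ret; rewrite -(kara_id2 _ _ _ _ _ _ _ (Hxi _ Hj)).
exact: isv_cat.
Qed.


Lemma inv_final (A0 A1 : 'M[L]_n) (x a b : L) : x ^+ 2 = a + b * x ->
  (1 *: A0 + b *: A1) \in unitmx ->
  (1 *: A0 + (- a) *: ((A1 *m invmx (1 *: A0 + b *: A1)) *m A1)) \in unitmx ->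
  (A0 + x *: A1) \in unitmx /\
  invmx (A0 + x *: A1) =
    invmx (1 *: A0 + (- a) *: ((A1 *m invmx (1 *: A0 + b *: A1)) *m A1)) +
    x *: (-1 *: (invmx (1 *: A0 + (- a) *: ((A1 *m invmx (1 *: A0 + b *: A1)) *m A1))
                  *m (A1 *m invmx (1 *: A0 + b *: A1)))).
Proof.
move=> Hx Hu.
set X := A1 *m invmx (1 *: A0 + b *: A1).
set S := 1 *: A0 + (- a) *: (X *m A1) => HS.
have HX : X *m A0 = A1 - b *: (X *m A1).
  have H : X *m (1 *: A0 + b *: A1) = A1 by rewrite /X mulmxKV.
  by rewrite -{1}H scale1r mulmxDr -scalemxAr addrK.
have Hid : (1%:M - x *: X) *m (A0 + x *: A1) = S.
  rewrite mulmxBl mul1mx mulmxDr -!scalemxAl -scalemxAr HX scalerA -expr2 Hx /S.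
  move: (X *m A1) => Y.
  apply/matrixP => r c; rewrite !mxE; ring.
have Hout : invmx S + x *: (-1 *: (invmx S *m X)) = invmx S *m (1%:M - x *: X).
  by rewrite mulmxBr mulmx1 -scalemxAr scaleN1r scalerN.
have H1 : (invmx S + x *: (-1 *: (invmx S *m X))) *m (A0 + x *: A1) = 1%:M.
  by rewrite Hout -mulmxA Hid mulVmx.
have [_ HA] := mulmx1_unit H1.
split => //.
by rewrite -[LHS]mul1mx -H1 mulmxK.
Qed.

Lemma invJ_ok j x A regs : (j <= m)%N -> isv j regs x A ->
  okp (invJ j x) regs (fun r o => A \in unitmx /\ isv j r o (invmx A)).
Proof.
elim: j x A regs => [|j IH] x A regs Hj HA.
  have [Hx ->] := isv0 _ _ _ HA.
  move=> regs'; rewrite /runc /slp_run /=.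
  case: ifP => // Hu [<-]; rewrite map_unitmx Hu; split => //.
  by rewrite -map_invmx; apply: isv0_mk.
have Hj' : (j <= m)%N := ltnW Hj.
have [A0 [A1 [HA0 HA1 ->]]] := isv_split _ _ _ _ HA.
clear HA.
have HmA : - al j.+1 \in K j by rewrite memvN Hal.
rewrite [invJ _ _]/=.
apply: (okp_bind (okc_okp (lin2E _ _ _ _ _ _ _ _ Hj' (mem1K j) (Hbe _ Hj) HA0 HA1))) => r1 o1 E1 H1; push E1.
apply: (okp_bind (IH _ _ _ Hj' H1)) => r2 o2 E2 [Hu2 H2]; push E2.
apply: (okp_bind (okc_okp (mulJ_ok _ _ _ _ _ _ Hj' HA1 H2))) => r3 o3 E3 H3; push E3.
apply: (okp_bind (okc_okp (mulJ_ok _ _ _ _ _ _ Hj' H3 HA1))) => r4 o4 E4 H4; push E4.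
apply: (okp_bind (okc_okp (lin2E _ _ _ _ _ _ _ _ Hj' (mem1K j) HmA HA0 H4))) => r5 o5 E5 H5; push E5.
apply: (okp_bind (IH _ _ _ Hj' H5)) => r6 o6 E6 [Hu6 H6]; push E6.
apply: (okp_bind (okc_okp (mulJ_ok _ _ _ _ _ _ Hj' H6 H3))) => r7 o7 E7 H7; push E7.
apply: (okp_bind (okc_okp (lin1E _ _ _ _ _ Hj' (memN1K j) H7))) => r8 o8 E8 H8; push E8.
apply: okp_ret.
have [HU HI] := inv_final _ _ _ _ _ (Hxi _ Hj) Hu2 Hu6.
by split => //; rewrite HI; apply: isv_cat.
Qed.


Definition e0 j : seq M := 1%:M :: nseq (2 ^ j).-1 0.

Lemma E_0 j : (E j)`_0 = 1.
Proof. by elim: j => //= j IH; rewrite nth_cat size_E expn_gt0. Qed.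

Lemma rep_cons0 F (a : M) q : (0 < size F)%N ->
  rep F (a :: nseq q 0) = F`_0 *: map_mx (in_alg L) a.
Proof.
move=> H0; rewrite /rep (bigD1 (Ordinal H0)) //= big1 ?addr0 //.
move=> [[|i] Hi] //= _; by rewrite nth_nseq if_same map_mx0 scaler0.
Qed.

Lemma rep_nseq0 F q : rep F (nseq q (0 : M)) = 0.
Proof. by rewrite /rep big1 // => i _; rewrite nth_nseq if_same map_mx0 scaler0. Qed.

Lemma rep_e0 j : rep (E j) (e0 j) = 1%:M.
Proof. by rewrite rep_cons0 ?size_E ?expn_gt0 // E_0 scale1r map_mx1. Qed.

Lemma isv_one j regs x : (j < m)%N -> isv j.+1 regs x 1%:M ->
  isv j regs (take (2 ^ j) x) 1%:M /\ isv j regs (drop (2 ^ j) x) 0.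
Proof.
move=> Hj [W [P HS R]].
have HW : W = e0 j.+1.
  apply: (rep_inj (E j.+1)); rewrite ?size_E //; first exact: HfreeE.
    by rewrite /e0 /= size_nseq prednK // expn_gt0.
  by rewrite R rep_e0.
have Hh : (2 ^ j = (2 ^ j).-1.+1)%N by rewrite prednK // expn_gt0.
have Hle : ((2 ^ j).-1 <= (2 ^ j.+1).-1)%N.
  by rewrite -ltnS -Hh prednK ?expn_gt0 // expnS mul2n -addnn leq_addr.
split.
  exists (take (2 ^ j) W); split; first exact: pt_take.
    by rewrite HW /e0 Hh /= take_nseq // size_nseq.
  by rewrite HW /e0 Hh /= take_nseq // rep_cons0 ?size_E ?expn_gt0 // E_0 scale1r map_mx1.
exists (drop (2 ^ j) W); split; first exact: pt_drop.
  by rewrite size_drop HS expnS mul2n -addnn addnK.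
by rewrite HW /e0 Hh /= drop_nseq rep_nseq0.
Qed.

Lemma okc_and (c : code) (regs : seq M) Q1 Q2 : okc c regs Q1 -> okp c regs Q2 ->
  okc c regs (fun r o => Q1 r o /\ Q2 r o).
Proof. by move=> [r [R Ex H]] Hp; exists r; split => //; split => //; apply: Hp. Qed.

Lemma invJ_ok1 j x regs : (j <= m)%N -> isv j regs x 1%:M ->
  okc (invJ j x) regs (fun _ _ => True).
Proof.
elim: j x regs => [|j IH] x regs Hj HA.
  have [Hx H1] := isv0 _ _ _ HA.
  have Hu : nth 0 regs (nth 0%N x 0) \in unitmx.
    by rewrite -(map_unitmx (in_alg L)) -H1 unitmx1.
  exists (rcons regs (invmx (nth 0 regs (nth 0%N x 0)))); split => //.
  - by rewrite /runc /slp_run /= Hu.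
  - by exists [:: invmx (nth 0 regs (nth 0%N x 0))]; rewrite cats1.
have Hj' : (j <= m)%N := ltnW Hj.
have [HA0 HA1] := isv_one _ _ _ Hj HA.
clear HA.
have HmA : - al j.+1 \in K j by rewrite memvN Hal.
rewrite [invJ _ _]/=.
apply: (okc_bind (lin2E _ _ _ _ _ _ _ _ Hj' (mem1K j) (Hbe _ Hj) HA0 HA1)) => r1 o1 E1 H1; push E1.
rewrite scale1r scaler0 addr0 in H1.
apply: (okc_bind (okc_and _ _ _ _ (IH _ _ Hj' H1) (invJ_ok _ _ _ _ Hj' H1))) => r2 o2 E2 [_ [_ H2]]; push E2.
rewrite invmx1 in H2.
apply: (okc_bind (mulJ_ok _ _ _ _ _ _ Hj' HA1 H2)) => r3 o3 E3 H3; push E3.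
rewrite mul0mx in H3.
apply: (okc_bind (mulJ_ok _ _ _ _ _ _ Hj' H3 HA1)) => r4 o4 E4 H4; push E4.
rewrite mul0mx in H4.
apply: (okc_bind (lin2E _ _ _ _ _ _ _ _ Hj' (mem1K j) HmA HA0 H4)) => r5 o5 E5 H5; push E5.
rewrite scale1r scaler0 addr0 in H5.
apply: (okc_bind (okc_and _ _ _ _ (IH _ _ Hj' H5) (invJ_ok _ _ _ _ Hj' H5))) => r6 o6 E6 [_ [_ H6]]; push E6.
apply: (okc_bind (mulJ_ok _ _ _ _ _ _ Hj' H6 H3)) => r7 o7 E7 H7; push E7.
apply: (okc_bind (lin1E _ _ _ _ _ Hj' (memN1K j) H7)) => r8 o8 E8 H8; push E8.
exact: okc_ret.
Qed.

End Algo.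

Section Tower.
Variables (k : fieldType) (L : fieldExtType k) (m : nat) (K : nat -> {subfield L}).
Hypothesis HK0 : (K 0%N : {vspace L}) = 1%VS.
Hypothesis HKsub : forall j, (j < m)%N -> (K j <= K j.+1)%VS.
Hypothesis HKdeg : forall j, (j < m)%N -> \dim_(K j) (K j.+1) = 2%N.

Lemma dimKS j : (j < m)%N -> \dim (K j.+1) = (2 * \dim (K j))%N.
Proof. by move=> Hj; rewrite (dim_sup_field (HKsub _ Hj)) HKdeg. Qed.

Lemma ex_xi j : exists x, (j < m)%N ==> ((x \in K j.+1) && (x \notin K j)).
Proof.
case: (ltnP j m) => Hj; last by exists 0.
have : ~~ (K j.+1 <= K j)%VS.
  apply/negP => /dimvS; rewrite dimKS // => H.
  by move: (adim_gt0 (K j)) H; lia.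
by move=> /subvPn [x Hx Hnx]; exists x; rewrite Hx Hnx.
Qed.

Definition xi (j : nat) : L := if j is j'.+1 then xchoose (ex_xi j') else 0.
Definition al (j : nat) : L :=
  if j is j'.+1 then - (minPoly (K j') (xi j))`_0 else 0.
Definition be (j : nat) : L :=
  if j is j'.+1 then - (minPoly (K j') (xi j))`_1 else 0.

Lemma xi_in j : (j < m)%N -> xi j.+1 \in K j.+1 /\ xi j.+1 \notin K j.
Proof.
move=> Hj; have := xchooseP (ex_xi j) => /implyP /(_ Hj) /andP [H1 H2].
by [].
Qed.

Lemma adj_eq j : (j < m)%N ->
  adjoin_degree (K j) (xi j.+1) = 2%N /\ <<K j; xi j.+1>>%VS = K j.+1.
Proof.
move=> Hj; have [H1 H2] := xi_in _ Hj.
have Hsub : (<<K j; xi j.+1>> <= K j.+1)%VS by apply/FadjoinP; split => //; apply: HKsub.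
have Hd := dimvS Hsub; rewrite dim_Fadjoin dimKS // in Hd.
have Hn1 : adjoin_degree (K j) (xi j.+1) != 1%N by rewrite adjoin_deg_eq1.
have Hpos : (0 < adjoin_degree (K j) (xi j.+1))%N by rewrite /adjoin_degree.
have Hdp := adim_gt0 (K j).
have Had : adjoin_degree (K j) (xi j.+1) = 2%N.
  move: Hd Hn1 Hpos; rewrite leq_pmul2r //.
  by case: (adjoin_degree _ _) => [|[|[|]]].
split => //; apply/eqP; rewrite eqEdim Hsub dim_Fadjoin Had dimKS //.
by rewrite leqnn.
Qed.

Lemma al_be_in j : (j < m)%N -> al j.+1 \in K j /\ be j.+1 \in K j.
Proof.
move=> Hj; have /polyOverP Hp := minPolyOver (K j) (xi j.+1).
by rewrite /al /be !memvN; split; apply: Hp.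
Qed.

Lemma xi_quad j : (j < m)%N -> xi j.+1 ^+ 2 = al j.+1 + be j.+1 * xi j.+1.
Proof.
move=> Hj; have [Had _] := adj_eq _ Hj.
have Hr := root_minPoly (K j) (xi j.+1).
have Hs : size (minPoly (K j) (xi j.+1)) = 3%N by rewrite size_minPoly Had.
have Hm := monic_minPoly (K j) (xi j.+1).
move: Hr; rewrite /root horner_coef Hs !big_ord_recl big_ord0 /= /al /be.
move/monicP: Hm; rewrite /lead_coef Hs /= => ->.
rewrite /bump /= !addn0 => /eqP H.
move: H => /(congr1 (fun t => xi j.+1 ^+ 2 - t)); rewrite subr0 => <-.
rewrite [xi _]/=. move: (xchoose _) (minPoly _ _) => x p. ring.
Qed.


Lemma dimK j : (j <= m)%N -> \dim (K j) = (2 ^ j)%N.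
Proof.
elim: j => [|j IH] Hj; first by rewrite HK0 dimv1.
by rewrite dimKS // IH ?expnS // ltnW.
Qed.

Lemma E_basis j : (j <= m)%N -> basis_of (K j) (E k L xi j).
Proof.
elim: j => [|j IH] Hj.
  by rewrite basisEdim /= HK0 span_seq1 subvv dimv1.
have Hj' : (j < m)%N := Hj.
have IHs := span_basis (IH (ltnW Hj)).
rewrite basisEdim size_E dimK // leqnn andbT.
apply/subvP => x; rewrite -(adj_eq _ Hj').2 => Hx.
have Hp := Fadjoin_poly_eq Hx.
have Hsz := size_Fadjoin_poly (K j) (xi j.+1) x.
rewrite (adj_eq _ Hj').1 in Hsz.
have /polyOverP Hov := Fadjoin_polyOver (K j) (xi j.+1) x.
move: Hp; rewrite (horner_coef_wide _ Hsz) !big_ord_recl big_ord0 /= => <-.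
rewrite expr0 mulr1 expr1 addr0 /= span_cat; apply: memv_add.
  by rewrite IHs; apply: Hov.
have Hp1 : (Fadjoin_poly (K j) (xi j.+1) x)`_1 \in <<E k L xi j>>%VS by rewrite IHs; apply: Hov.
rewrite (coord_span (X := in_tuple (E k L xi j)) Hp1) mulr_suml.
apply: memv_suml => i _; rewrite -scalerAl; apply: memvZ; apply: memv_span.
by apply: map_f; apply: mem_nth.
Qed.

End Tower.

Section Coord.
Variables (k : fieldType) (L : fieldExtType k) (n : nat).

Lemma sum_coord d (b : d.-tuple L) (Hb : basis_of fullv b) (M : 'M[L]_n) :
  \sum_(i < d) b`_i *: map_mx (in_alg L) (coord_mx b M i) = M.
Proof.
apply/matrixP => r c; rewrite summxE [RHS](coord_basis Hb (memvf (M r c))).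
by apply: eq_bigr => i _; rewrite !mxE mulr_algr.
Qed.

Lemma rep_coord d (b : d.-tuple L) (Hb : basis_of fullv b) (M : 'M[L]_n) :
  rep (b : seq L) [seq coord_mx b M i | i <- enum 'I_d] = M.
Proof.
case: b Hb => s Hs /= Hb.
have Hs' : size s = d := eqP Hs. subst d.
apply/matrixP => r c; rewrite repE.
rewrite [RHS](@coord_basis _ _ fullv _ (Tuple Hs) (M r c) Hb (memvf _)).
apply: eq_bigr => i _; rewrite (nth_map i) ?size_enum_ord // nth_ord_enum mxE.
by [].
Qed.

Lemma rep1 (V : seq 'M[k]_n) : rep [:: (1 : L)] V = map_mx (in_alg L) V`_0.
Proof. by rewrite /rep /= big_ord1 scale1r. Qed.
End Coord.

Theorem proposition4p7 (k : fieldType) (L : fieldExtType k) (m n : nat)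
  (K : nat -> {subfield L})
  (HK0 : (K 0%N : {vspace L}) = 1%VS)
  (HKm : (K m : {vspace L}) = fullv)
  (HKsub : forall j, (j < m)%N -> (K j <= K j.+1)%VS)
  (HKdeg : forall j, (j < m)%N -> \dim_(K j) (K j.+1) = 2%N)
  (Hn : (0 < n)%N)
  (b : (\dim {:L}).-tuple L) (Hb : basis_of fullv b) :
  exists (prog : seq (instr k)) (outs : seq nat),
    n_mul prog = (3 * (3 ^ m - 2 ^ m))%N /\
    n_inv prog = (2 ^ m)%N /\
    exists P : {mpoly k[\dim {:L} * (n * n)]},
      (exists v, P.@[v] != 0) /\
      forall A : 'M[L]_n, P.@[coord_pt b A] != 0 ->
        A \in unitmx /\
        slp_eval prog outs [seq coord_mx b A i | i <- enum 'I_(\dim {:L})]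
          = Some [seq coord_mx b (invmx A) i | i <- enum 'I_(\dim {:L})].
Proof.
set d := \dim {:L}.
pose X := xi k L m K HKsub HKdeg.
pose Al := al k L m K HKsub HKdeg.
pose Be := be k L m K HKsub HKdeg.
have Hbasis := E_basis k L m K HK0 HKsub HKdeg.
have HspanE : forall j, (j <= m)%N -> <<E k L X j>>%VS = K j.
  by move=> j Hj; apply: span_basis; apply: Hbasis.
have HfreeE : forall j, (j <= m)%N -> free (E k L X j).
  by move=> j Hj; apply: basis_free; apply: Hbasis.
have Hal : forall j, (j < m)%N -> Al j.+1 \in K j.
  by move=> j Hj; apply: (al_be_in k L m K HKsub HKdeg j Hj).1.
have Hbe : forall j, (j < m)%N -> Be j.+1 \in K j.
  by move=> j Hj; apply: (al_be_in k L m K HKsub HKdeg j Hj).2.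
have Hxi : forall j, (j < m)%N -> X j.+1 ^+ 2 = Al j.+1 + Be j.+1 * X j.+1.
  by move=> j Hj; apply: (xi_quad k L m K HKsub HKdeg j Hj).
pose Em := E k L X m.
pose ts1 : seq (term k L) := [seq (b`_i, ([:: 1], [:: i])) | i <- iota 0 d].
pose c : code k := bind (lin Em ts1) (fun y =>
  bind (invJ k L X Al Be m y) (fun z => lin (b : seq L) [:: (1, (Em, z))])).
exists (bprog (c d)), (bout (c d)).
split.
  rewrite /c nmul_bind nmul_lin nmul_bind nmul_lin (invJ_count _ _ _ _ _ _ _ _).1.
  by rewrite add0n addn0.
split.
  rewrite /c ninv_bind ninv_lin ninv_bind ninv_lin (invJ_count _ _ _ _ _ _ _ _).2.
  by rewrite add0n addn0.
pose inp (A : 'M[L]_n) := [seq coord_mx b A i | i <- enum 'I_d].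
have Hsz : forall A, size (inp A) = d by move=> A; rewrite size_map size_enum_ord.
have Hstep1 : forall A, okc (lin Em ts1) (inp A) (fun r o => isv k L n X m r o A).
  move=> A.
  have Hts : forall t, t \in ts1 -> [/\ size t.2.1 = size t.2.2, valid (inp A) t.2.2 &
      forall i, (i < size t.2.1)%N -> t.1 * t.2.1`_i \in <<Em>>%VS].
    move=> t /mapP [i]; rewrite mem_iota add0n => Hi -> /=; split => //.
      by rewrite /valid /= Hsz andbT; case/andP: Hi.
    by move=> i0 _; rewrite /Em HspanE // HKm memvf.
  have [r [W [R Ex P HS Rp]]] := lin_ok Em ts1 (inp A) Hts.
  exists r; split => //; exists W; split => //; first by rewrite HS size_E.
  rewrite Rp /ts1 big_map.
  have -> : iota 0 d = index_iota 0 d by rewrite /index_iota subn0.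
  rewrite big_mkord -[RHS](@sum_coord _ _ _ _ _ Hb A); apply: eq_bigr => i _ /=.
  by rewrite rep1 /= (nth_map i) ?size_enum_ord // nth_ord_enum.
have Hstep3 : forall A r2 z, isv k L n X m r2 z (invmx A) ->
    okc (lin (b : seq L) [:: (1, (Em, z))]) r2
      (fun r o => vals r o = [seq coord_mx b (invmx A) i | i <- enum 'I_d]).
  move=> A r2 z [W0 [P0 S0 R0]].
  have Hts : forall t, t \in [:: (1, (Em, z))] -> [/\ size t.2.1 = size t.2.2, valid r2 t.2.2 &
      forall i, (i < size t.2.1)%N -> t.1 * t.2.1`_i \in <<(b : seq L)>>%VS].
    move=> t; rewrite inE => /eqP -> /=; split.
    - by rewrite -(pt_size _ _ _ P0) S0 size_E.
    - by case: P0.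
    - by move=> i _; rewrite (span_basis Hb) memvf.
  have [r [W [R Ex P HS Rp]]] := lin_ok (b : seq L) _ r2 Hts.
  exists r; split => //.
  case: P => _ ->.
  apply: (rep_inj (b : seq L)); first exact: basis_free Hb.
  - by rewrite HS.
  - by rewrite size_map size_enum_ord size_tuple.
  rewrite Rp rep_coord // big_cons big_nil addr0 scale1r.
  by case: P0 => _ ->.
have Hok : forall A, okp c (inp A) (fun r o => A \in unitmx /\
    vals r o = [seq coord_mx b (invmx A) i | i <- enum 'I_d]).
  move=> A.
  apply: (okp_bind (okc_okp (Hstep1 A))) => r1 o1 E1 H1.
  apply: (okp_bind (invJ_ok k L n X Al Be m K HspanE Hal Hbe Hxi m o1 A r1 (leqnn m) H1)).
  move=> r2 o2 E2 [HA H2].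
  apply: okc_okp; apply: okc_weaken; first exact: (Hstep3 _ _ _ H2).
  by move=> r o H; split.
have Hone : runc c (inp 1%:M) != None.
  have : okc c (inp 1%:M) (fun _ _ => True).
    apply: (okc_bind (Hstep1 1%:M)) => r1 o1 E1 H1.
    apply: (okc_bind (okc_and _ _ _ _ _ _
      (invJ_ok1 k L n X Al Be m K HspanE HfreeE Hal Hbe Hxi m o1 r1 (leqnn m) H1)
      (invJ_ok k L n X Al Be m K HspanE Hal Hbe Hxi m o1 _ r1 (leqnn m) H1))).
    move=> r2 o2 E2 [_ [_ H2]].
    by apply: okc_weaken; first exact: (Hstep3 _ _ _ H2).
  by move=> [r [-> _ _]].
pose Xin : seq 'M[{mpoly k[d * (n * n)]}]_n :=
  [seq \matrix_(r, c0) 'X_(mxvec_index i (mxvec_index r c0)) | i <- enum 'I_d].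
have Hreg : forall A : 'M[L]_n, regsv k n (d * (n * n)) (coord_pt b A) 1 Xin = inp A.
  move=> A; rewrite /regsv /Xin -map_comp; apply: eq_map => i /=.
  rewrite meval1 invr1 scale1r; apply/matrixP => r c0.
  by rewrite !mxE (mevalXU (coord_pt b A)) /coord_pt mxvecE mxE mxvecE mxE.
have [D HD] := @run_poly k n (d * (n * n)) (bprog (c d)) 1 Xin.
exists D; split.
  exists (coord_pt b 1%:M); rewrite HD meval1 oner_eq0 /= Hreg.
  by move: Hone; rewrite /runc Hsz.
move=> A; rewrite HD Hreg => /andP [_ HA].
have Hrun : runc c (inp A) = slp_run (bprog (c d)) (inp A) by rewrite /runc Hsz.
move: HA; case R: (slp_run (bprog (c d)) (inp A)) => [r|] // _.
have [HU HV] := Hok A r (etrans Hrun R).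
split => //.
rewrite /slp_eval R /=; congr Some.
by rewrite -HV /vals /outc Hsz.
Qed.
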